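(* Fix amplitudes $\overline r_{j,\mathrm{eq}}>0$ and consider the decoupled phase dynamics $$\frac{d\overline\theta_j}{dt}=\frac{\kappa_j}{2C\,\overline r_{j,\mathrm{eq}}}\Big(\iota_j\sin(\overline\theta_j-\gamma_j)-\sum_{\ell\ne j}g_{j\ell}\overline r_{\ell,\mathrm{eq}}\sin(\overline\theta_j-\overline\theta_\ell)\Big),\quad j=1,\dots,N.$$ Assume there is an equilibrium $\overline\theta_{\mathrm{eq}}$ such that $|\overline\theta_{j,\mathrm{eq}}-\overline\theta_{\ell,\mathrm{eq}}|<\pi/2$ and $|\overline\theta_{j,\mathrm{eq}}-\gamma_j|>\pi/2$ for all $j,\ell$ (angle differences measured on the circle, so the latter means $\cos(\overline\theta_{j,\mathrm{eq}}-\gamma_j)<0$). (i) If at least one $\iota_j>0$ (at least one constant-current load), then $\overline\theta_{\mathrm{eq}}$ is locally exponentially stable. (ii) If $\iota_j=0$ for all $j$, then the phase-synchronized equilibrium manifold $\{\overline\theta:\overline\theta_j=\overline\theta_\ell\ \forall j,\ell\}$ is locally exponentially stable.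
   Context: $C>0$, $\kappa_j>0$. Network: a real symmetric $N\times N$ Kron-reduced conductance matrix with off-diagonal entries $-g_{j\ell}$, $g_{j\ell}=g_{\ell j}\ge0$, whose associated graph (edges where $g_{j\ell}>0$) is connected. $\iota_j\ge 0$ and $\gamma_j\in\mathbb R$ are the amplitude and phase offset of an equivalent constant current source at node $j$. Phases live on the torus $\mathbb T^N$. *)

(* Defs.v *)
From Stdlib Require Import Reals.
Open Scope R_scope.

(* Nodes are indexed by natural numbers j < N; a phase vector is nat -> R
   (only the coordinates j < N matter). *)

Fixpoint sumN (n : nat) (f : nat -> R) : R :=
  match n with
  | O => 0
  | S m => sumN m f + f m
  end.

Definition normN (N : nat) (v : nat -> R) : R :=
  sqrt (sumN N (fun j => (v j) ^ 2)).

Definition diffv (x y : nat -> R) : nat -> R := fun j => x j - y j.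

Definition constv (c : R) : nat -> R := fun _ => c.

Definition phase_rhs (N : nat) (C : R) (kappa r iota gamma : nat -> R)
  (g : nat -> nat -> R) (th : nat -> R) (j : nat) : R :=
  kappa j / (2 * C * r j) *
  (iota j * sin (th j - gamma j)
   - sumN N (fun l => if Nat.eqb l j then 0
                      else g j l * r l * sin (th j - th l))).

(* x : R -> R^N is a solution of the phase dynamics (solutions of this
   globally Lipschitz vector field exist on all of R). *)
Definition is_solution (N : nat) (C : R) (kappa r iota gamma : nat -> R)
  (g : nat -> nat -> R) (x : R -> nat -> R) : Prop :=
  forall (t : R) (j : nat), (j < N)%nat ->
    derivable_pt_lim (fun s => x s j) t (phase_rhs N C kappa r iota gamma g (x t) j).

Definition is_equilibrium (N : nat) (C : R) (kappa r iota gamma : nat -> R)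
  (g : nat -> nat -> R) (th : nat -> R) : Prop :=
  forall j, (j < N)%nat -> phase_rhs N C kappa r iota gamma g th j = 0.

Inductive reach (N : nat) (g : nat -> nat -> R) : nat -> nat -> Prop :=
  | reach_refl : forall j, (j < N)%nat -> reach N g j j
  | reach_step : forall j k l, (j < N)%nat -> (k < N)%nat -> j <> k ->
      g j k > 0 -> reach N g k l -> reach N g j l.

Definition connected_graph (N : nat) (g : nat -> nat -> R) : Prop :=
  forall j l, (j < N)%nat -> (l < N)%nat -> reach N g j l.

Definition loc_exp_stable_point (N : nat) (C : R) (kappa r iota gamma : nat -> R)
  (g : nat -> nat -> R) (th_eq : nat -> R) : Prop :=
  exists delta M lam : R, delta > 0 /\ M > 0 /\ lam > 0 /\
    forall x : R -> nat -> R,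
      is_solution N C kappa r iota gamma g x ->
      normN N (diffv (x 0) th_eq) < delta ->
      forall t, 0 <= t ->
        normN N (diffv (x t) th_eq) <= M * exp (- lam * t) * normN N (diffv (x 0) th_eq).

(* Local exponential stability of the synchronization manifold
   S = { th | th_j = th_l for all j, l } = { c * 1 | c in R }, with
   dist(th, S) = inf_c |th - c 1| (the infimum is attained). *)
Definition loc_exp_stable_sync (N : nat) (C : R) (kappa r iota gamma : nat -> R)
  (g : nat -> nat -> R) : Prop :=
  exists delta M lam : R, delta > 0 /\ M > 0 /\ lam > 0 /\
    forall x : R -> nat -> R,
      is_solution N C kappa r iota gamma g x ->
      (exists c0, normN N (diffv (x 0) (constv c0)) < delta) ->
      forall t, 0 <= t ->
        forall c0 : R, exists c : R,
          normN N (diffv (x t) (constv c))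
            <= M * exp (- lam * t) * normN N (diffv (x 0) (constv c0)).

(* Main.v *)
Require Import Defs.
From Stdlib Require Import Reals Lra Lia Classical.
Open Scope R_scope.


Lemma sumN_ext n f h : (forall i, (i < n)%nat -> f i = h i) -> sumN n f = sumN n h.
Proof. induction n; simpl; intros H; auto. rewrite IHn by (intros; apply H; lia). rewrite H by lia. auto. Qed.

Lemma sumN_plus n f h : sumN n (fun i => f i + h i) = sumN n f + sumN n h.
Proof. induction n; simpl; [lra|]. rewrite IHn. lra. Qed.

Lemma sumN_minus n f h : sumN n (fun i => f i - h i) = sumN n f - sumN n h.
Proof. induction n; simpl; [lra|]. rewrite IHn. lra. Qed.

Lemma sumN_scal n c f : sumN n (fun i => c * f i) = c * sumN n f.
Proof. induction n; simpl; [lra|]. rewrite IHn. lra. Qed.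

Lemma sumN_zero n f : (forall i, (i<n)%nat -> f i = 0) -> sumN n f = 0.
Proof. intros H. rewrite (sumN_ext n f (fun i => 0 * 0)) by (intros; rewrite H; auto; lra).
rewrite sumN_scal. lra. Qed.

Lemma sumN_le n f h : (forall i, (i < n)%nat -> f i <= h i) -> sumN n f <= sumN n h.
Proof. induction n; simpl; intros H; [lra|]. assert (H1 := H n (Nat.lt_succ_diag_r n)).
assert (sumN n f <= sumN n h) by (apply IHn; intros; apply H; lia). lra. Qed.

Lemma sumN_nonneg n f : (forall i, (i < n)%nat -> 0 <= f i) -> 0 <= sumN n f.
Proof. intros H. replace 0 with (sumN n (fun _ => 0 * 0)). apply sumN_le. intros; rewrite Rmult_0_l; auto.
rewrite sumN_scal; lra. Qed.

Lemma sumN_term_le n f i : (forall k, (k < n)%nat -> 0 <= f k) -> (i < n)%nat -> f i <= sumN n f.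
Proof. induction n; simpl; intros H Hi; [lia|].
assert (0 <= sumN n f) by (apply sumN_nonneg; intros; apply H; lia).
destruct (Nat.eq_dec i n). subst. lra.
assert (f i <= sumN n f) by (apply IHn; [intros; apply H; lia| lia]).
assert (0 <= f n) by (apply H; lia). lra. Qed.

Lemma sumN_swap n m (F : nat -> nat -> R) :
  sumN n (fun i => sumN m (fun j => F i j)) = sumN m (fun j => sumN n (fun i => F i j)).
Proof. induction n; simpl.
- symmetry. apply sumN_zero. auto.
- rewrite IHn. rewrite <- sumN_plus. auto. Qed.


Lemma Rabs_le_b x c : Rabs x <= c -> -c <= x <= c.
Proof. unfold Rabs; destruct Rcase_abs; lra. Qed.

Lemma cos_lip a b : Rabs (cos a - cos b) <= Rabs (a - b).
Proof.
destruct (Rtotal_order a b) as [H|[H|H]].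
- destruct (MVT_cor2 cos (fun x => - sin x) a b H) as [c [E _]].
  { intros; apply derivable_pt_lim_cos. }
  replace (cos a - cos b) with (- (cos b - cos a)) by ring. rewrite E, Rabs_Ropp, Rabs_mult.
  rewrite (Rabs_minus_sym a b). assert (Rabs (- sin c) <= 1).
  { rewrite Rabs_Ropp. apply Rabs_le. apply SIN_bound. }
  assert (0 <= Rabs (b - a)) by apply Rabs_pos. nra.
- subst. replace (cos b - cos b) with 0 by ring. rewrite Rabs_R0. apply Rabs_pos.
- destruct (MVT_cor2 cos (fun x => - sin x) b a H) as [c [E _]].
  { intros; apply derivable_pt_lim_cos. }
  rewrite E, Rabs_mult. assert (Rabs (- sin c) <= 1).
  { rewrite Rabs_Ropp. apply Rabs_le. apply SIN_bound. }
  assert (0 <= Rabs (a - b)) by apply Rabs_pos. nra.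
Qed.

Lemma sin_mvt u v : exists xi, Rabs (xi - u) <= Rabs v /\ sin (u + v) - sin u = cos xi * v.
Proof.
destruct (Rtotal_order v 0) as [H|[H|H]].
- destruct (MVT_cor2 sin cos (u+v) u) as [c [E Hc]]; [lra| intros; apply derivable_pt_lim_sin|].
  exists c. split. rewrite Rabs_left by lra. rewrite Rabs_left1 by lra. lra.
  replace (sin (u + v) - sin u) with (- (sin u - sin (u+v))) by ring. rewrite E. ring.
- subst. exists u. split. replace (u-u) with 0 by ring. rewrite Rabs_R0; lra.
  replace (u+0) with u by ring. ring.
- destruct (MVT_cor2 sin cos u (u+v)) as [c [E Hc]]; [lra| intros; apply derivable_pt_lim_sin|].
  exists c. split. rewrite Rabs_right by lra. rewrite Rabs_right by lra. lra.
  rewrite E. ring.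
Qed.

Lemma sin_lower u v c : 0 <= c -> 2 * c <= cos u -> Rabs v <= c ->
  c * v ^ 2 <= v * (sin (u + v) - sin u).
Proof. intros Hc Hu Hv. destruct (sin_mvt u v) as [xi [H1 H2]]. rewrite H2.
assert (H3 := cos_lip xi u). assert (cos xi >= c).
{ assert (Rabs (cos xi - cos u) <= c) by lra. apply Rabs_le_b in H. lra. }
replace (v * (cos xi * v)) with (cos xi * v^2) by ring. assert (0 <= v^2) by nra. nra. Qed.

Lemma sin_upper u v c i : 0 <= c -> 0 <= i -> i * cos u <= - 2 * c * i -> Rabs v <= c ->
  i * (v * (sin (u + v) - sin u)) <= - c * i * v ^ 2.
Proof. intros Hc Hi Hu Hv. destruct (sin_mvt u v) as [xi [H1 H2]]. rewrite H2.
assert (H3 := cos_lip xi u). assert (cos xi <= cos u + c).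
{ assert (Rabs (cos xi - cos u) <= c) by lra. apply Rabs_le_b in H. lra. }
replace (i * (v * (cos xi * v))) with ((i * cos xi) * v^2) by ring. assert (0 <= v^2) by nra.
assert (i * cos xi <= - c * i) by nra. nra. Qed.


Lemma cont_eps f x eps : continuity_pt f x -> 0 < eps ->
  exists d, 0 < d /\ forall y, Rabs (y - x) < d -> Rabs (f y - f x) < eps.
Proof. intros Hc He. unfold continuity_pt, continue_in, limit1_in, limit_in in Hc.
destruct (Hc eps He) as [d [Hd H]]. exists d; split; auto. intros y Hy.
destruct (Req_dec y x). subst. replace (f x - f x) with 0 by ring. rewrite Rabs_R0; lra.
apply (H y). split. split. exact I. auto. exact Hy. Qed.

Lemma trap (phi phi' : R -> R) (W : R) :
  (forall t, derivable_pt_lim phi t (phi' t)) ->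
  (forall t, 0 < t -> phi t < W -> phi' t <= 0) -> phi 0 < W ->
  forall t, 0 <= t -> phi t <= phi 0.
Proof.
intros Hd Hneg H0 T HT.
destruct (Rle_or_lt (phi T) (phi 0)) as [|HlT]; auto. exfalso.
assert (Hcont : forall s, continuity_pt phi s).
{ intros s. apply derivable_continuous_pt. exists (phi' s). apply Hd. }
set (y := (phi 0 + Rmin W (phi T)) / 2).
assert (Hy1 : phi 0 < y). { unfold y. unfold Rmin; destruct Rle_dec; lra. }
assert (Hy2 : y < W). { unfold y. unfold Rmin; destruct Rle_dec; lra. }
assert (Hy3 : y < phi T). { unfold y. unfold Rmin; destruct Rle_dec; lra. }
set (E := fun s => 0 <= s <= T /\ forall u, 0 <= u <= s -> phi u < y).
assert (HE0 : E 0). { split. lra. intros u Hu. replace u with 0 by lra. auto. }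
assert (Hb : bound E). { exists T. intros s [Hs _]. lra. }
destruct (completeness E Hb (ex_intro _ 0 HE0)) as [s1 [Hub Hlub]].
assert (Hs10 : 0 <= s1) by (apply Hub; auto).
assert (Hs1T : s1 <= T). { apply Hlub. intros s [Hs _]. lra. }
assert (Hbefore : forall u, 0 <= u < s1 -> phi u < y).
{ intros u Hu. destruct (classic (exists s, E s /\ u <= s)) as [[s [[_ Hs] Hus]]|Hn].
  apply Hs; lra. exfalso.
  assert (s1 <= u). { apply Hlub. intros s Es. destruct (Rle_or_lt s u); auto. exfalso; apply Hn. exists s; split; auto; lra. }
  lra. }
assert (Hge : y <= phi s1).
{ destruct (Rle_or_lt y (phi s1)) as [|Hlt]; auto. exfalso.
  assert (s1 < T). { destruct (Rle_or_lt T s1); auto. replace s1 with T in Hlt by lra. lra. }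
  destruct (cont_eps phi s1 (y - phi s1) (Hcont s1)) as [d [Hd0 Hdd]]; [lra|].
  set (s2 := Rmin (s1 + d/2) T).
  assert (s1 < s2). { unfold s2, Rmin; destruct Rle_dec; lra. }
  assert (s2 <= s1 + d/2). { unfold s2, Rmin; destruct Rle_dec; lra. }
  assert (E s2). { split. split. lra. unfold s2, Rmin; destruct Rle_dec; lra.
    intros u Hu. destruct (Rlt_or_le u s1). apply Hbefore; lra.
    assert (Rabs (u - s1) < d). { rewrite Rabs_right by lra. lra. }
    specialize (Hdd u H4). unfold Rabs in Hdd; destruct Rcase_abs in Hdd; lra. }
  assert (s2 <= s1) by (apply Hub; auto). lra. }
assert (Hs1pos : 0 < s1). { destruct (Rle_or_lt s1 0); auto. replace s1 with 0 in Hge by lra. lra. }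
destruct (MVT_cor2 phi phi' 0 s1 Hs1pos) as [xi [Exi Hxi]]. { intros; apply Hd. }
assert (phi xi < y) by (apply Hbefore; lra).
assert (phi' xi <= 0) by (apply Hneg; lra).
assert (phi s1 - phi 0 <= 0) by (rewrite Exi; nra). lra.
Qed.


Lemma dpl_eq f x l l' : derivable_pt_lim f x l -> l = l' -> derivable_pt_lim f x l'.
Proof. intros H ->; auto. Qed.

Lemma deriv_sumN n (F : R -> nat -> R) (F' : nat -> R) t :
  (forall j, (j < n)%nat -> derivable_pt_lim (fun s => F s j) t (F' j)) ->
  derivable_pt_lim (fun s => sumN n (F s)) t (sumN n F').
Proof. induction n; simpl; intros H.
- apply (derivable_pt_lim_const 0 t).
- apply (derivable_pt_lim_plus (fun s => sumN n (F s)) (fun s => F s n)).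
  apply IHn; intros; apply H; lia. apply H; lia. Qed.

Lemma deriv_sq (h : R -> R) (p e t d : R) : derivable_pt_lim h t d ->
  derivable_pt_lim (fun s => p * (h s - e)^2) t (p * (2 * (h t - e) * d)).
Proof. intros Hh.
assert (H1 : derivable_pt_lim (fun s => h s - e) t d).
{ apply dpl_eq with (d - 0). apply (derivable_pt_lim_minus h (fct_cte e)); auto. apply derivable_pt_lim_const. ring. }
assert (H2 := derivable_pt_lim_mult _ _ _ _ _ H1 H1).
assert (H3 := derivable_pt_lim_scal _ p _ _ H2).
eapply derivable_pt_lim_ext; [|eapply dpl_eq; [exact H3|]].
intros z. unfold mult_real_fct, mult_fct. ring. simpl. ring. Qed.

Lemma deriv_exp k t : derivable_pt_lim (fun s => exp (k * s)) t (k * exp (k * t)).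
Proof.
assert (H1 : derivable_pt_lim (fun s => k * s) t k).
{ apply dpl_eq with (k * 1). apply (derivable_pt_lim_scal id k t 1). apply derivable_pt_lim_id. ring. }
assert (H2 := derivable_pt_lim_comp _ exp _ _ _ H1 (derivable_pt_lim_exp (k * t))).
eapply derivable_pt_lim_ext; [|eapply dpl_eq; [exact H2|]].
intros z; reflexivity. simpl. ring. Qed.

Lemma exp_ge1 x : 0 <= x -> 1 <= exp x.
Proof. intros H. destruct (Req_dec x 0). subst; rewrite exp_0; lra.
assert (H1 := exp_ineq1 x). lra. Qed.

Lemma engine N (p e : nat -> R) (x : R -> nat -> R) (D : R -> nat -> R) (c mu pmin : R) :
  0 < c -> 0 < mu -> 0 < pmin -> (forall j, (j < N)%nat -> pmin <= p j) ->
  (forall t j, (j < N)%nat -> derivable_pt_lim (fun s => x s j) t (D t j)) ->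
  (forall t, 0 < t -> (forall j, (j < N)%nat -> Rabs (x t j - e j) < c) ->
     sumN N (fun j => p j * (x t j - e j) * D t j) <= - mu * sumN N (fun j => p j * (x t j - e j)^2)) ->
  sumN N (fun j => p j * (x 0 j - e j)^2) < pmin * c^2 ->
  forall t, 0 <= t ->
    sumN N (fun j => p j * (x t j - e j)^2) <= exp (- (2 * mu) * t) * sumN N (fun j => p j * (x 0 j - e j)^2).
Proof.
intros Hc Hmu Hpmin Hp Hd Hbd H0 t Ht.
set (V := fun s => sumN N (fun j => p j * (x s j - e j)^2)).
set (V' := fun s => sumN N (fun j => p j * (2 * (x s j - e j) * D s j))).
assert (HV : forall s, derivable_pt_lim V s (V' s)).
{ intros s. unfold V, V'. apply (deriv_sumN N (fun s j => p j * (x s j - e j)^2)).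
  intros j Hj. apply deriv_sq. apply Hd; auto. }
assert (HVnn : forall s, 0 <= V s).
{ intros s. unfold V. apply sumN_nonneg. intros i Hi. assert (pmin <= p i) by auto. assert (0 <= (x s i - e i)^2) by apply pow2_ge_0. nra. }
set (phi := fun s => V s * exp (2 * mu * s)).
set (phi' := fun s => V' s * exp (2 * mu * s) + V s * (2 * mu * exp (2 * mu * s))).
assert (Hphi : forall s, derivable_pt_lim phi s (phi' s)).
{ intros s. unfold phi, phi'. apply (derivable_pt_lim_mult V (fun s => exp (2 * mu * s))); auto.
  apply deriv_exp. }
assert (Htrap := trap phi phi' (pmin * c^2) Hphi).
assert (Hle : phi t <= phi 0).
{ apply Htrap; auto.
  - intros s Hs Hlt. unfold phi'.
    assert (He1 : 1 <= exp (2 * mu * s)) by (apply exp_ge1; nra). assert (Hepos := exp_pos (2 * mu * s)).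
    assert (HVs : V s < pmin * c ^ 2). { unfold phi in Hlt; cbv beta in Hlt. assert (HV0 := HVnn s). assert (V s * 1 <= V s * exp (2 * mu * s)) by (apply Rmult_le_compat_l; lra). lra. }
    assert (Hclose : forall j, (j < N)%nat -> Rabs (x s j - e j) < c).
    { intros j Hj. assert (pmin * (x s j - e j)^2 <= V s).
      { unfold V. apply Rle_trans with (p j * (x s j - e j) ^ 2).
        assert (pmin <= p j) by auto. assert (0 <= (x s j - e j)^2) by apply pow2_ge_0. apply Rmult_le_compat_r; auto.
        apply (sumN_term_le N (fun j => p j * (x s j - e j) ^ 2)); auto.
        intros k Hk. assert (pmin <= p k) by auto. assert (0 <= (x s k - e k)^2) by apply pow2_ge_0. nra. }
      assert ((x s j - e j)^2 < c^2) by nra.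
      unfold Rabs; destruct Rcase_abs; nra. }
    specialize (Hbd s Hs Hclose).
    assert (V' s = 2 * sumN N (fun j => p j * (x s j - e j) * D s j)).
    { unfold V'. rewrite <- sumN_scal. apply sumN_ext. intros; ring. }
    fold (V s) in Hbd. nra.
  - unfold phi. rewrite Rmult_0_r, exp_0, Rmult_1_r. fold (V 0) in H0. auto. }
unfold phi in Hle. rewrite Rmult_0_r, exp_0, Rmult_1_r in Hle.
fold (V t). fold (V 0).
assert (exp (- (2 * mu) * t) * exp (2 * mu * t) = 1).
{ rewrite <- exp_plus. replace (- (2 * mu) * t + 2 * mu * t) with 0 by ring. apply exp_0. }
assert (Hp1 := exp_pos (- (2 * mu) * t)).
assert (H1 : exp (- (2 * mu) * t) * (V t * exp (2 * mu * t)) <= exp (- (2 * mu) * t) * V 0) by (apply Rmult_le_compat_l; lra).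
replace (exp (- (2 * mu) * t) * (V t * exp (2 * mu * t))) with (V t * (exp (- (2 * mu) * t) * exp (2 * mu * t))) in H1 by ring.
rewrite H in H1. lra.
Qed.


Lemma reach_bound N g (Q : (nat -> R) -> R) (z : (nat -> R) -> R) :
  (forall j k, (j < N)%nat -> (k < N)%nat -> j <> k -> g j k > 0 ->
     exists b, 0 < b /\ forall d, b * (d j - d k)^2 <= Q d) ->
  forall j l, reach N g j l ->
  (exists K, forall d, (d l - z d)^2 <= K * Q d) ->
  exists K, forall d, (d j - z d)^2 <= K * Q d.
Proof.
intros Hb j l Hr. induction Hr as [j Hj | j k l Hj Hk Hjk Hg Hr IH]; intros H; auto.
destruct (IH H) as [K HK]. destruct (Hb j k Hj Hk Hjk Hg) as [b [Hb0 Hbb]].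
exists (2 / b + 2 * K). intros d. specialize (HK d). specialize (Hbb d).
assert ((d j - z d)^2 <= 2 * (d j - d k)^2 + 2 * (d k - z d)^2).
{ assert (0 <= (d j - d k - (d k - z d))^2) by apply pow2_ge_0. nra. }
assert ((d j - d k)^2 <= / b * Q d).
{ apply Rmult_le_reg_l with b; auto. rewrite <- Rmult_assoc, Rinv_r by lra. lra. }
unfold Rdiv. nra.
Qed.

Lemma sum_bound n (F : nat -> (nat -> R) -> R) (Q : (nat -> R) -> R) :
  (forall i, (i < n)%nat -> exists K, forall d, F i d <= K * Q d) ->
  exists K, forall d, sumN n (fun i => F i d) <= K * Q d.
Proof.
induction n; intros H.
- exists 0. intros d. simpl. lra.
- destruct IHn as [K1 H1]. intros; apply H; lia.
  destruct (H n) as [K2 H2]. lia.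
  exists (K1 + K2). intros d. simpl. specialize (H1 d). specialize (H2 d). lra.
Qed.

Lemma pos_bound (X Q : (nat -> R) -> R) :
  (forall d, 0 <= Q d) -> (exists K, forall d, X d <= K * Q d) ->
  exists K, 0 < K /\ forall d, X d <= K * Q d.
Proof. intros HQ [K HK]. exists (Rabs K + 1). split. assert (0 <= Rabs K) by apply Rabs_pos. lra.
intros d. specialize (HK d). specialize (HQ d). assert (K <= Rabs K) by apply RRle_abs. nra. Qed.

Lemma fin_min_aux n (P : nat -> R -> Prop) :
  (forall i, (i < n)%nat -> exists m, 0 < m /\ forall m', 0 < m' -> m' <= m -> P i m') ->
  exists m, 0 < m /\ forall m', 0 < m' -> m' <= m -> forall i, (i < n)%nat -> P i m'.
Proof.
induction n; intros H.
- exists 1. split. lra. intros; lia.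
- destruct IHn as [m1 [Hm1 H1]]. intros; apply H; lia.
  destruct (H n) as [m2 [Hm2 H2]]. lia.
  exists (Rmin m1 m2). split. unfold Rmin; destruct Rle_dec; lra.
  intros m' Hm' Hle i Hi. assert (m' <= m1 /\ m' <= m2) by (unfold Rmin in Hle; destruct Rle_dec; lra).
  destruct (Nat.eq_dec i n). subst. apply H2; lra. apply H1; try lra; lia.
Qed.

Lemma fin_min n (P : nat -> R -> Prop) :
  (forall i, (i < n)%nat -> exists m, 0 < m /\ forall m', 0 < m' -> m' <= m -> P i m') ->
  exists m, 0 < m /\ forall m', 0 < m' -> m' <= m -> forall i, (i < n)%nat -> P i m'.
Proof. apply fin_min_aux. Qed.


Definition Gf N (iota gamma : nat -> R) g (r : nat -> R) (y : nat -> R) j :=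
  iota j * sin (y j - gamma j) -
  sumN N (fun l => if Nat.eqb l j then 0 else g j l * r l * sin (y j - y l)).

Definition Qc N (iota : nat -> R) (g : nat -> nat -> R) (r : nat -> R) (d : nat -> R) :=
  sumN N (fun j => r j * iota j * (d j)^2) +
  / 2 * sumN N (fun j => sumN N (fun l => if Nat.eqb l j then 0 else g j l * r j * r l * (d j - d l)^2)).

Lemma symm_sum N (F : nat -> nat -> R) :
  sumN N (fun j => sumN N (fun l => F j l)) = / 2 * sumN N (fun j => sumN N (fun l => F j l + F l j)).
Proof.
assert (H : sumN N (fun j => sumN N (fun l => F j l + F l j)) =
   sumN N (fun j => sumN N (fun l => F j l)) + sumN N (fun j => sumN N (fun l => F l j))).
{ rewrite <- sumN_plus. apply sumN_ext. intros. apply sumN_plus. }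
rewrite H. rewrite (sumN_swap N N (fun l j => F j l)). lra.
Qed.

Lemma core N (iota gamma : nat -> R) g r (y e : nat -> R) c :
  0 < c ->
  (forall j l, (j < N)%nat -> (l < N)%nat -> 2 * c <= cos (e j - e l)) ->
  (forall j, (j < N)%nat -> iota j * cos (e j - gamma j) <= - 2 * c * iota j) ->
  (forall j, (j < N)%nat -> 0 <= iota j) ->
  (forall j, (j < N)%nat -> 0 < r j) ->
  (forall j l, (j < N)%nat -> (l < N)%nat -> g j l = g l j) ->
  (forall j l, (j < N)%nat -> (l < N)%nat -> j <> l -> g j l >= 0) ->
  (forall j, (j < N)%nat -> Rabs (y j - e j) <= c / 2) ->
  sumN N (fun j => r j * (y j - e j) * (Gf N iota gamma g r y j - Gf N iota gamma g r e j))
  <= - c * Qc N iota g r (diffv y e).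
Proof.
intros Hc Hcos Hload Hi Hr Hgs Hgn Hy.
set (d := diffv y e).
set (T1 := sumN N (fun j => r j * (iota j * (d j * (sin (e j - gamma j + d j) - sin (e j - gamma j)))))).
set (F := fun j l => if Nat.eqb l j then 0 else g j l * r j * r l *
           (d j * (sin (e j - e l + (d j - d l)) - sin (e j - e l)))).
assert (E1 : sumN N (fun j => r j * (y j - e j) * (Gf N iota gamma g r y j - Gf N iota gamma g r e j))
   = T1 - sumN N (fun j => sumN N (fun l => F j l))).
{ unfold T1. rewrite <- sumN_minus. apply sumN_ext. intros j Hj.
  assert (Einner : sumN N (fun l => F j l) = r j * d j *
     (sumN N (fun l => if Nat.eqb l j then 0 else g j l * r l * sin (y j - y l)) -
      sumN N (fun l => if Nat.eqb l j then 0 else g j l * r l * sin (e j - e l)))).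
  { rewrite <- sumN_minus, <- sumN_scal. apply sumN_ext. intros l Hl. unfold F.
    destruct (Nat.eqb l j). ring.
    replace (y j - y l) with (e j - e l + (d j - d l)) by (unfold d, diffv; ring). ring. }
  rewrite Einner. unfold Gf.
  replace (y j - gamma j) with (e j - gamma j + d j) by (unfold d, diffv; ring).
  replace (y j - e j) with (d j) by (unfold d, diffv; ring). ring. }
rewrite E1.
assert (H1 : T1 <= - c * sumN N (fun j => r j * iota j * (d j)^2)).
{ unfold T1. rewrite <- sumN_scal. apply sumN_le. intros j Hj.
  assert (Hu := sin_upper (e j - gamma j) (d j) c (iota j) (Rlt_le _ _ Hc) (Hi j Hj) (Hload j Hj)).
  assert (Rabs (d j) <= c) by (unfold d, diffv; specialize (Hy j Hj); lra).
  specialize (Hu H). assert (Hrj := Hr j Hj).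
  apply Rle_trans with (r j * (- c * iota j * d j ^ 2)).
  apply Rmult_le_compat_l; lra. right; ring. }
assert (H2 : sumN N (fun j => sumN N (fun l => F j l + F l j)) >=
    c * sumN N (fun j => sumN N (fun l => if Nat.eqb l j then 0 else g j l * r j * r l * (d j - d l)^2))).
{ apply Rle_ge. rewrite <- sumN_scal. apply sumN_le. intros j Hj. rewrite <- sumN_scal. apply sumN_le. intros l Hl.
  unfold F. rewrite (Nat.eqb_sym j l). destruct (Nat.eqb l j) eqn:El. lra.
  assert (Hjl : j <> l). { intro; subst. rewrite Nat.eqb_refl in El. discriminate. }
  rewrite (Hgs l j Hl Hj).
  replace (e l - e j + (d l - d j)) with (- (e j - e l + (d j - d l))) by ring.
  replace (e l - e j) with (- (e j - e l)) by ring. rewrite !sin_neg.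
  assert (Hlow := sin_lower (e j - e l) (d j - d l) c (Rlt_le _ _ Hc) (Hcos j l Hj Hl)).
  assert (Rabs (d j - d l) <= c).
  { unfold d, diffv. assert (Hyj := Hy j Hj). assert (Hyl := Hy l Hl).
    apply Rabs_le_b in Hyj. apply Rabs_le_b in Hyl. unfold Rabs; destruct Rcase_abs; lra. }
  specialize (Hlow H). assert (0 <= g j l * r j * r l).
  { assert (Hrj := Hr j Hj). assert (Hrl := Hr l Hl). assert (g j l >= 0) by auto.
    apply Rmult_le_pos; [apply Rmult_le_pos|]; lra. }
  apply Rle_trans with (g j l * r j * r l * ((d j - d l) * (sin (e j - e l + (d j - d l)) - sin (e j - e l)))).
  nra. right. ring. }
rewrite symm_sum. unfold Qc. fold d. lra.
Qed.


Lemma nn4 a b c x : a >= 0 -> 0 < b -> 0 < c -> 0 <= a * b * c * x ^ 2.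
Proof. intros. assert (0 <= x^2) by apply pow2_ge_0. apply Rmult_le_pos; auto.
apply Rmult_le_pos; [apply Rmult_le_pos|]; lra. Qed.

Lemma dbl_nonneg N (F : nat -> nat -> R) :
  (forall j l, (j < N)%nat -> (l < N)%nat -> 0 <= F j l) -> 0 <= sumN N (fun j => sumN N (fun l => F j l)).
Proof. intros H. apply sumN_nonneg. intros. apply sumN_nonneg. auto. Qed.

Lemma Qc_parts N iota g r d :
  (forall j, (j < N)%nat -> 0 <= iota j) -> (forall j, (j < N)%nat -> 0 < r j) ->
  (forall j l, (j < N)%nat -> (l < N)%nat -> j <> l -> g j l >= 0) ->
  0 <= sumN N (fun j => r j * iota j * (d j)^2) /\
  0 <= sumN N (fun j => sumN N (fun l => if Nat.eqb l j then 0 else g j l * r j * r l * (d j - d l)^2)).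
Proof. intros Hi Hr Hg. split.
- apply sumN_nonneg. intros j Hj. assert (0 <= d j ^2) by apply pow2_ge_0.
  assert (Hrj := Hr j Hj). assert (Hij := Hi j Hj). apply Rmult_le_pos; [apply Rmult_le_pos|]; lra.
- apply dbl_nonneg. intros j l Hj Hl. destruct (Nat.eqb l j) eqn:E. lra.
  assert (j <> l). { intro; subst; rewrite Nat.eqb_refl in E; discriminate. }
  apply nn4; auto.
Qed.

Lemma Qc_nonneg N iota g r d :
  (forall j, (j < N)%nat -> 0 <= iota j) -> (forall j, (j < N)%nat -> 0 < r j) ->
  (forall j l, (j < N)%nat -> (l < N)%nat -> j <> l -> g j l >= 0) -> 0 <= Qc N iota g r d.
Proof. intros Hi Hr Hg. destruct (Qc_parts N iota g r d Hi Hr Hg). unfold Qc. lra. Qed.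

Lemma Qc_edge N iota g r :
  (forall j, (j < N)%nat -> 0 <= iota j) -> (forall j, (j < N)%nat -> 0 < r j) ->
  (forall j l, (j < N)%nat -> (l < N)%nat -> j <> l -> g j l >= 0) ->
  forall j k, (j < N)%nat -> (k < N)%nat -> j <> k -> g j k > 0 ->
  exists b, 0 < b /\ forall d, b * (d j - d k)^2 <= Qc N iota g r d.
Proof. intros Hi Hr Hg j k Hj Hk Hjk Hgjk. exists (/2 * (g j k * r j * r k)). split.
{ assert (Hrj := Hr j Hj). assert (Hrk := Hr k Hk). assert (0 < g j k * r j * r k).
  repeat apply Rmult_lt_0_compat; lra. lra. }
intros d. destruct (Qc_parts N iota g r d Hi Hr Hg) as [H1 H2]. unfold Qc.
set (F := fun j l => if Nat.eqb l j then 0 else g j l * r j * r l * (d j - d l)^2).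
assert (HF : forall j l, (j < N)%nat -> (l < N)%nat -> 0 <= F j l).
{ intros a b Ha Hb. unfold F. destruct (Nat.eqb b a) eqn:E. lra.
  assert (a <> b). { intro; subst; rewrite Nat.eqb_refl in E; discriminate. }
  apply nn4; auto. }
assert (F j k <= sumN N (fun l => F j l)).
{ apply (sumN_term_le N (fun l => F j l)); auto. }
assert (sumN N (fun l => F j l) <= sumN N (fun j => sumN N (fun l => F j l))).
{ apply (sumN_term_le N (fun j => sumN N (fun l => F j l))); auto. intros; apply sumN_nonneg; auto. }
assert (F j k = g j k * r j * r k * (d j - d k)^2).
{ unfold F. destruct (Nat.eqb k j) eqn:E; auto. apply Nat.eqb_eq in E. subst; tauto. }
assert (EQ : sumN N (fun j => sumN N (fun l => if Nat.eqb l j then 0 else g j l * r j * r l * (d j - d l)^2)) = sumN N (fun j => sumN N (fun l => F j l))) by reflexivity. rewrite EQ in H2 |- *. nra.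
Qed.

Lemma min_identity N (p y : nat -> R) m a :
  sumN N (fun j => p j * (y j - m)) = 0 ->
  (forall j, (j < N)%nat -> 0 <= p j) ->
  sumN N (fun j => p j * (y j - m)^2) <= sumN N (fun j => p j * (y j - a)^2).
Proof. intros H0 Hp.
assert (E : sumN N (fun j => p j * (y j - a)^2) =
   sumN N (fun j => p j * (y j - m)^2) + 2 * (m - a) * sumN N (fun j => p j * (y j - m))
   + (m - a)^2 * sumN N p).
{ rewrite <- !sumN_scal, <- !sumN_plus. apply sumN_ext. intros; ring. }
rewrite E, H0. assert (0 <= sumN N p) by (apply sumN_nonneg; auto).
assert (0 <= (m - a)^2) by apply pow2_ge_0. nra.
Qed.

Lemma final_conv A B pmin pmax mu t :
  0 < pmin -> 0 < pmax -> 0 <= A -> 0 <= B ->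
  pmin * A <= exp (- (2 * mu) * t) * (pmax * B) ->
  sqrt A <= sqrt (pmax / pmin) * exp (- mu * t) * sqrt B.
Proof. intros Hpm HpM HA HB H.
assert (Ee : exp (- (2 * mu) * t) = exp (- mu * t) * exp (- mu * t)).
{ rewrite <- exp_plus. f_equal. ring. }
assert (Hep := exp_pos (- mu * t)).
assert (Hq : 0 <= pmax / pmin) by (unfold Rdiv; apply Rmult_le_pos; [lra| left; apply Rinv_0_lt_compat; lra]).
assert (Es : sqrt (pmax / pmin) * exp (- mu * t) * sqrt B = sqrt (pmax / pmin * (exp (- mu * t) * exp (- mu * t)) * B)).
{ rewrite (sqrt_mult (pmax / pmin * (exp (- mu * t) * exp (- mu * t))) B) by (try apply Rmult_le_pos; nra).
  rewrite (sqrt_mult (pmax / pmin) (exp (- mu * t) * exp (- mu * t))) by nra.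
  rewrite sqrt_square by lra. ring. }
rewrite Es.
apply sqrt_le_1_alt. rewrite <- Ee.
apply Rmult_le_reg_l with pmin; auto.
replace (pmin * (pmax / pmin * exp (- (2 * mu) * t) * B)) with (exp (- (2 * mu) * t) * (pmax * B)).
auto. field. lra.
Qed.


Lemma rhs_G N C kappa r iota gamma g y j :
  phase_rhs N C kappa r iota gamma g y j = kappa j / (2 * C * r j) * Gf N iota gamma g r y j.
Proof. reflexivity. Qed.

Lemma pmin_ex N (p : nat -> R) : (forall j, (j < N)%nat -> 0 < p j) ->
  exists pmin, 0 < pmin /\ forall j, (j < N)%nat -> pmin <= p j.
Proof. intros Hp. destruct (fin_min N (fun i m => m <= p i)) as [m [Hm H]].
{ intros i Hi. exists (p i). split; auto. }
exists m. split; auto. intros j Hj. apply (H m); auto; lra. Qed.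

Lemma sum_sq_lt N (v : nat -> R) W : 0 < W -> sqrt (sumN N (fun j => v j ^ 2)) < sqrt W ->
  sumN N (fun j => v j ^ 2) < W.
Proof. intros HW H. apply sqrt_lt_0_alt. auto. Qed.

Lemma part1 (N : nat) (C : R) (kappa r iota gamma : nat -> R)
  (g : nat -> nat -> R) (e : nat -> R)
  (hC : C > 0)
  (hkappa : forall j, (j < N)%nat -> kappa j > 0)
  (hr : forall j, (j < N)%nat -> r j > 0)
  (hiota : forall j, (j < N)%nat -> iota j >= 0)
  (hg_sym : forall j l, (j < N)%nat -> (l < N)%nat -> g j l = g l j)
  (hg_nonneg : forall j l, (j < N)%nat -> (l < N)%nat -> j <> l -> g j l >= 0)
  (hconn : connected_graph N g)
  (heq : is_equilibrium N C kappa r iota gamma g e)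
  (hclose : forall j l, (j < N)%nat -> (l < N)%nat -> cos (e j - e l) > 0)
  (hload : forall j, (j < N)%nat -> cos (e j - gamma j) < 0)
  (k0 : nat) (hk0 : (k0 < N)%nat) (hik0 : iota k0 > 0) :
  loc_exp_stable_point N C kappa r iota gamma g e.
Proof.
assert (Hi : forall j, (j < N)%nat -> 0 <= iota j) by (intros; specialize (hiota j H); lra).
assert (Hr : forall j, (j < N)%nat -> 0 < r j) by (intros; apply hr; auto).
set (p := fun j => 2 * C * r j * r j / kappa j).
assert (Hp : forall j, (j < N)%nat -> 0 < p j).
{ intros j Hj. unfold p. assert (Hk := hkappa j Hj). assert (Hrj := hr j Hj).
  unfold Rdiv. apply Rmult_lt_0_compat. repeat apply Rmult_lt_0_compat; lra. apply Rinv_0_lt_compat; lra. }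
assert (Hpf : forall j, (j < N)%nat -> p j * (kappa j / (2 * C * r j)) = r j).
{ intros j Hj. unfold p. assert (Hk := hkappa j Hj). assert (Hrj := hr j Hj). field. lra. }
destruct (pmin_ex N p Hp) as [pmin [Hpmin Hpm]].
set (pmax := sumN N p).
assert (HpM : forall j, (j < N)%nat -> p j <= pmax).
{ intros j Hj. apply sumN_term_le; auto. intros; left; auto. }
assert (Hpmax : 0 < pmax). { assert (Hp0 := Hp k0 hk0). assert (H := HpM k0 hk0). lra. }
destruct (fin_min N (fun j m => (forall l, (l < N)%nat -> 2 * m <= cos (e j - e l)) /\
                                iota j * cos (e j - gamma j) <= - 2 * m * iota j)) as [c [Hc Hcc]].
{ intros j Hj. destruct (fin_min N (fun l m => 2 * m <= cos (e j - e l))) as [m1 [Hm1 H1]].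
  { intros l Hl. exists (cos (e j - e l) / 2). split. assert (H := hclose j l Hj Hl). lra.
    intros; lra. }
  assert (Hlj := hload j Hj). assert (Hij := Hi j Hj).
  exists (Rmin m1 (- cos (e j - gamma j) / 2)). split. unfold Rmin; destruct Rle_dec; lra.
  intros m' Hm' Hle. assert (m' <= m1 /\ m' <= - cos (e j - gamma j) / 2) by (unfold Rmin in Hle; destruct Rle_dec; lra).
  split. intros l Hl. apply H1; auto; lra. nra. }
specialize (Hcc c Hc (Rle_refl c)).
(* Poincare *)
set (Q := Qc N iota g r).
assert (HQ : forall d, 0 <= Q d) by (intros; apply Qc_nonneg; auto).
assert (Hbase : exists K, forall d : nat -> R, (d k0 - (fun _ => 0) d)^2 <= K * Q d).
{ exists (/ (r k0 * iota k0)). intros d. destruct (Qc_parts N iota g r d Hi Hr hg_nonneg) as [H1 H2].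
  assert (r k0 * iota k0 * d k0 ^ 2 <= sumN N (fun j => r j * iota j * d j ^2)).
  { apply (sumN_term_le N (fun j => r j * iota j * d j ^2)); auto. intros k Hk.
    assert (Hrk := Hr k Hk). assert (Hik := Hi k Hk). assert (0 <= d k ^2) by apply pow2_ge_0.
    apply Rmult_le_pos; [apply Rmult_le_pos|]; lra. }
  assert (Hpos : 0 < r k0 * iota k0) by (assert (Hrk := Hr k0 hk0); nra).
  assert (Q d >= r k0 * iota k0 * d k0 ^ 2) by (unfold Q, Qc; lra).
  replace (d k0 - 0) with (d k0) by ring.
  apply Rmult_le_reg_l with (r k0 * iota k0); auto.
  rewrite <- Rmult_assoc, Rinv_r by lra. lra. }
destruct (sum_bound N (fun j d => p j * (d j - (fun _ => 0) d)^2) Q) as [K0 HK0].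
{ intros j Hj. destruct (reach_bound N g Q (fun _ => 0) (Qc_edge N iota g r Hi Hr hg_nonneg) j k0
     (hconn j k0 Hj hk0) Hbase) as [K HK].
  exists (p j * K). intros d. rewrite Rmult_assoc. apply Rmult_le_compat_l. left; auto. apply HK. }
destruct (pos_bound (fun d => sumN N (fun j => p j * (d j - 0)^2)) Q HQ (ex_intro _ K0 HK0)) as [Kv [HKv HKvb]].
set (W := pmin * (c / 2)^2).
assert (HW : 0 < W) by (unfold W; apply Rmult_lt_0_compat; auto; apply pow_lt; lra).
exists (sqrt (W / pmax)), (sqrt (pmax / pmin)), (c / Kv).
split. apply sqrt_lt_R0. apply Rdiv_lt_0_compat; auto.
split. apply sqrt_lt_R0. apply Rdiv_lt_0_compat; auto.
split. apply Rdiv_lt_0_compat; auto.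
intros x Hsol Hx0 t Ht.
assert (Heng := engine N p e x (fun t j => phase_rhs N C kappa r iota gamma g (x t) j) (c / 2) (c / Kv) pmin).
assert (Hge : forall j, (j < N)%nat -> Gf N iota gamma g r e j = 0).
{ intros j Hj. specialize (heq j Hj). rewrite rhs_G in heq.
  assert (kappa j / (2 * C * r j) <> 0).
  { assert (Hk := hkappa j Hj). assert (Hrj := hr j Hj). unfold Rdiv.
    apply Rmult_integral_contrapositive; split. lra. apply Rinv_neq_0_compat. nra. }
  apply Rmult_integral in heq. tauto. }
assert (Hdecay : sumN N (fun j => p j * (x t j - e j)^2) <=
     exp (- (2 * (c / Kv)) * t) * sumN N (fun j => p j * (x 0 j - e j)^2)).
{ apply Heng; auto.
  - lra.
  - apply Rdiv_lt_0_compat; auto.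
  - intros s Hs Hcl.
    assert (E1 : sumN N (fun j => p j * (x s j - e j) * phase_rhs N C kappa r iota gamma g (x s) j) =
       sumN N (fun j => r j * (x s j - e j) * (Gf N iota gamma g r (x s) j - Gf N iota gamma g r e j))).
    { apply sumN_ext. intros j Hj. rewrite rhs_G, Hge by auto.
      rewrite <- (Hpf j Hj) at 2. ring. }
    rewrite E1.
    assert (Hco := core N iota gamma g r (x s) e c Hc (fun j l Hj Hl => proj1 (Hcc j Hj) l Hl)
        (fun j Hj => proj2 (Hcc j Hj)) Hi Hr hg_sym hg_nonneg).
    assert (Hco2 : sumN N (fun j => r j * (x s j - e j) * (Gf N iota gamma g r (x s) j - Gf N iota gamma g r e j))
       <= - c * Qc N iota g r (diffv (x s) e)).
    { apply Hco. intros j Hj. left. apply Hcl; auto. }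
    specialize (HKvb (diffv (x s) e)). cbv beta in HKvb.
    assert (E2 : sumN N (fun j => p j * (diffv (x s) e j - 0) ^ 2) = sumN N (fun j => p j * (x s j - e j)^2)).
    { apply sumN_ext. intros; unfold diffv; ring. }
    rewrite E2 in HKvb. fold Q. fold Q in Hco2.
    assert (c / Kv * sumN N (fun j => p j * (x s j - e j)^2) <= c * Q (diffv (x s) e)).
    { unfold Rdiv. rewrite Rmult_assoc. apply Rmult_le_compat_l. lra.
      apply Rmult_le_reg_l with Kv; auto. rewrite <- Rmult_assoc, Rinv_r by lra. lra. }
    lra.
  - apply Rle_lt_trans with (pmax * sumN N (fun j => (x 0 j - e j)^2)).
    { rewrite <- sumN_scal. apply sumN_le. intros j Hj. apply Rmult_le_compat_r. apply pow2_ge_0. auto. }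
    unfold normN, diffv in Hx0.
    assert (Hs := sum_sq_lt N (fun j => x 0 j - e j) (W / pmax)).
    assert (0 < W / pmax) by (apply Rdiv_lt_0_compat; auto).
    specialize (Hs H Hx0).
    fold W. apply Rmult_lt_reg_r with (/ pmax). apply Rinv_0_lt_compat; auto.
    replace (pmax * sumN N (fun j => (x 0 j - e j) ^ 2) * / pmax) with (sumN N (fun j => (x 0 j - e j) ^ 2)) by (field; lra).
    auto. }
unfold normN, diffv.
apply final_conv; auto.
- apply sumN_nonneg; intros; apply pow2_ge_0.
- apply sumN_nonneg; intros; apply pow2_ge_0.
- apply Rle_trans with (sumN N (fun j => p j * (x t j - e j)^2)).
  { rewrite <- sumN_scal. apply sumN_le. intros j Hj. apply Rmult_le_compat_r. apply pow2_ge_0. auto. }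
  apply Rle_trans with (1 := Hdecay). apply Rmult_le_compat_l. left; apply exp_pos.
  rewrite <- sumN_scal. apply sumN_le. intros j Hj. apply Rmult_le_compat_r. apply pow2_ge_0. auto.
Qed.


Lemma Gsum_zero N (iota gamma : nat -> R) g r y :
  (forall j, (j < N)%nat -> iota j = 0) ->
  (forall j l, (j < N)%nat -> (l < N)%nat -> g j l = g l j) ->
  sumN N (fun j => r j * Gf N iota gamma g r y j) = 0.
Proof. intros Hi Hg.
set (H := fun j l => if Nat.eqb l j then 0 else g j l * r j * r l * sin (y j - y l)).
assert (E : sumN N (fun j => r j * Gf N iota gamma g r y j) = - sumN N (fun j => sumN N (fun l => H j l))).
{ rewrite <- (Rmult_1_l (sumN N (fun j => sumN N (fun l => H j l)))).
  rewrite Ropp_mult_distr_l, <- sumN_scal. apply sumN_ext. intros j Hj. unfold Gf.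
  rewrite Hi by auto.
  assert (EE : sumN N (fun l => H j l) = r j * sumN N (fun l => if Nat.eqb l j then 0 else g j l * r l * sin (y j - y l))).
  { rewrite <- sumN_scal. apply sumN_ext. intros l Hl. unfold H. destruct (Nat.eqb l j); ring. }
  rewrite EE. ring. }
rewrite E, symm_sum. rewrite (sumN_zero N (fun j => sumN N (fun l => H j l + H l j))). ring.
intros j Hj. apply sumN_zero. intros l Hl. unfold H. rewrite (Nat.eqb_sym j l).
destruct (Nat.eqb l j). ring. rewrite (Hg l j Hl Hj).
replace (y l - y j) with (- (y j - y l)) by ring. rewrite sin_neg. ring.
Qed.

Lemma sumN_0 f : sumN 0 f = 0.
Proof. reflexivity. Qed.

Lemma part2 (N : nat) (C : R) (kappa r iota gamma : nat -> R)
  (g : nat -> nat -> R)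
  (hC : C > 0)
  (hkappa : forall j, (j < N)%nat -> kappa j > 0)
  (hr : forall j, (j < N)%nat -> r j > 0)
  (hg_sym : forall j l, (j < N)%nat -> (l < N)%nat -> g j l = g l j)
  (hg_nonneg : forall j l, (j < N)%nat -> (l < N)%nat -> j <> l -> g j l >= 0)
  (hconn : connected_graph N g)
  (hz : forall j, (j < N)%nat -> iota j = 0) :
  loc_exp_stable_sync N C kappa r iota gamma g.
Proof.
destruct N as [|N'].
{ exists 1, 1, 1. split; [lra|]. split; [lra|]. split; [lra|].
  intros x _ _ t _ c0. exists 0. unfold normN. simpl. rewrite sqrt_0. lra. }
set (N := S N') in *.
assert (hN : (0 < N)%nat) by (unfold N; lia).
assert (Hi : forall j, (j < N)%nat -> 0 <= iota j) by (intros; rewrite hz; auto; lra).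
assert (Hr : forall j, (j < N)%nat -> 0 < r j) by (intros; apply hr; auto).
set (p := fun j => 2 * C * r j * r j / kappa j).
assert (Hp : forall j, (j < N)%nat -> 0 < p j).
{ intros j Hj. unfold p. assert (Hk := hkappa j Hj). assert (Hrj := hr j Hj).
  unfold Rdiv. apply Rmult_lt_0_compat. repeat apply Rmult_lt_0_compat; lra. apply Rinv_0_lt_compat; lra. }
assert (Hpf : forall j, (j < N)%nat -> p j * (kappa j / (2 * C * r j)) = r j).
{ intros j Hj. unfold p. assert (Hk := hkappa j Hj). assert (Hrj := hr j Hj). field. lra. }
destruct (pmin_ex N p Hp) as [pmin [Hpmin Hpm]].
set (pmax := sumN N p).
assert (HpM : forall j, (j < N)%nat -> p j <= pmax).
{ intros j Hj. apply sumN_term_le; auto. intros; left; auto. }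
assert (Hpmax : 0 < pmax). { assert (Hp0 := Hp 0%nat hN). assert (H := HpM 0%nat hN). lra. }
set (c := / 2).
assert (Hc : 0 < c) by (unfold c; lra).
set (Q := Qc N iota g r).
assert (HQ : forall d, 0 <= Q d) by (intros; apply Qc_nonneg; auto).
assert (Hbase : exists K, forall d : nat -> R, (d 0%nat - (fun d : nat -> R => d 0%nat) d)^2 <= K * Q d).
{ exists 0. intros d. simpl. replace (d 0%nat - d 0%nat) with 0 by ring. lra. }
destruct (sum_bound N (fun j d => p j * (d j - (fun d : nat -> R => d 0%nat) d)^2) Q) as [K0 HK0].
{ intros j Hj. destruct (reach_bound N g Q (fun d => d 0%nat) (Qc_edge N iota g r Hi Hr hg_nonneg) j 0%nat
     (hconn j 0%nat Hj hN) Hbase) as [K HK].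
  exists (p j * K). intros d. rewrite Rmult_assoc. apply Rmult_le_compat_l. left; auto. apply HK. }
destruct (pos_bound (fun d => sumN N (fun j => p j * (d j - d 0%nat)^2)) Q HQ (ex_intro _ K0 HK0)) as [Kv [HKv HKvb]].
set (W := pmin * (c / 2)^2).
assert (HW : 0 < W) by (unfold W; apply Rmult_lt_0_compat; auto; apply pow_lt; lra).
exists (sqrt (W / pmax)), (sqrt (pmax / pmin)), (c / Kv).
split. apply sqrt_lt_R0. apply Rdiv_lt_0_compat; auto.
split. apply sqrt_lt_R0. apply Rdiv_lt_0_compat; auto.
split. apply Rdiv_lt_0_compat; auto.
intros x Hsol [c0' Hx0] t Ht c0.
set (S := fun s => sumN N (fun j => p j * x s j)).
assert (HS' : forall s, derivable_pt_lim S s 0).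
{ intros s. apply dpl_eq with (sumN N (fun j => p j * phase_rhs N C kappa r iota gamma g (x s) j)).
  apply (deriv_sumN N (fun s j => p j * x s j)). intros j Hj.
  apply (derivable_pt_lim_scal (fun s => x s j) (p j)). apply Hsol; auto.
  rewrite <- (Gsum_zero N iota gamma g r (x s) hz hg_sym). apply sumN_ext. intros j Hj.
  rewrite rhs_G, <- Rmult_assoc, (Hpf j Hj). ring. }
assert (HSc : forall s, 0 <= s -> S s = S 0).
{ intros s Hs. destruct (Req_dec s 0). subst; auto.
  destruct (MVT_cor2 S (fun _ => 0) 0 s) as [xi [Exi _]]. lra. intros; apply HS'. lra. }
set (m := S 0 / pmax).
assert (Hmean : forall s, 0 <= s -> sumN N (fun j => p j * (x s j - m)) = 0).
{ intros s Hs. replace (sumN N (fun j => p j * (x s j - m))) with (S s - m * pmax).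
  rewrite HSc by auto. unfold m. field. lra.
  unfold S, pmax. rewrite <- sumN_scal, <- sumN_minus. apply sumN_ext. intros; ring. }
assert (Hpnn : forall j, (j < N)%nat -> 0 <= p j) by (intros; left; auto).
set (e := constv m).
assert (Hge : forall j, (j < N)%nat -> Gf N iota gamma g r e j = 0).
{ intros j Hj. unfold Gf. rewrite hz by auto. rewrite sumN_zero. ring.
  intros l Hl. destruct (Nat.eqb l j). auto. unfold e, constv. rewrite Rminus_diag, sin_0. ring. }
assert (Hdecay : sumN N (fun j => p j * (x t j - e j)^2) <=
     exp (- (2 * (c / Kv)) * t) * sumN N (fun j => p j * (x 0 j - e j)^2)).
{ apply (engine N p e x (fun t j => phase_rhs N C kappa r iota gamma g (x t) j) (c / 2) (c / Kv) pmin); auto.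
  - lra.
  - apply Rdiv_lt_0_compat; auto.
  - intros s Hs Hcl.
    assert (E1 : sumN N (fun j => p j * (x s j - e j) * phase_rhs N C kappa r iota gamma g (x s) j) =
       sumN N (fun j => r j * (x s j - e j) * (Gf N iota gamma g r (x s) j - Gf N iota gamma g r e j))).
    { apply sumN_ext. intros j Hj. rewrite rhs_G, Hge by auto.
      rewrite <- (Hpf j Hj) at 2. ring. }
    rewrite E1.
    assert (Hcos : forall j l, (j < N)%nat -> (l < N)%nat -> 2 * c <= cos (e j - e l)).
    { intros. unfold e, constv. rewrite Rminus_diag, cos_0. unfold c. lra. }
    assert (Hld : forall j, (j < N)%nat -> iota j * cos (e j - gamma j) <= - 2 * c * iota j).
    { intros. rewrite hz by auto. lra. }
    assert (Hco2 := core N iota gamma g r (x s) e c Hc Hcos Hld Hi Hr hg_sym hg_nonneg).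
    assert (Hco3 : sumN N (fun j => r j * (x s j - e j) * (Gf N iota gamma g r (x s) j - Gf N iota gamma g r e j))
       <= - c * Qc N iota g r (diffv (x s) e)).
    { apply Hco2. intros j Hj. left. apply Hcl; auto. }
    specialize (HKvb (diffv (x s) e)). cbv beta in HKvb.
    assert (E2 : sumN N (fun j => p j * (diffv (x s) e j - diffv (x s) e 0%nat) ^ 2) =
                 sumN N (fun j => p j * (x s j - x s 0%nat)^2)).
    { apply sumN_ext. intros; unfold diffv, e, constv; ring. }
    rewrite E2 in HKvb.
    assert (Hmin := min_identity N p (x s) m (x s 0%nat) (Hmean s (Rlt_le _ _ Hs)) Hpnn).
    assert (E3 : sumN N (fun j => p j * (x s j - e j)^2) = sumN N (fun j => p j * (x s j - m)^2)) by reflexivity.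
    rewrite E3. fold Q in Hco3.
    assert (c / Kv * sumN N (fun j => p j * (x s j - m)^2) <= c * Q (diffv (x s) e)).
    { unfold Rdiv. rewrite Rmult_assoc. apply Rmult_le_compat_l. lra.
      apply Rmult_le_reg_l with Kv; auto. rewrite <- Rmult_assoc, Rinv_r by lra. lra. }
    lra.
  - apply Rle_lt_trans with (sumN N (fun j => p j * (x 0 j - c0')^2)).
    { apply (min_identity N p (x 0) m c0' (Hmean 0 (Rle_refl 0)) Hpnn). }
    apply Rle_lt_trans with (pmax * sumN N (fun j => (x 0 j - c0')^2)).
    { rewrite <- sumN_scal. apply sumN_le. intros j Hj. apply Rmult_le_compat_r. apply pow2_ge_0. auto. }
    unfold normN, diffv, constv in Hx0.
    assert (Hs := sum_sq_lt N (fun j => x 0 j - c0') (W / pmax)).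
    assert (0 < W / pmax) by (apply Rdiv_lt_0_compat; auto).
    specialize (Hs H Hx0).
    fold W. apply Rmult_lt_reg_r with (/ pmax). apply Rinv_0_lt_compat; auto.
    replace (pmax * sumN N (fun j => (x 0 j - c0') ^ 2) * / pmax) with (sumN N (fun j => (x 0 j - c0') ^ 2)) by (field; lra).
    auto. }
exists m. unfold normN, diffv, constv.
apply final_conv; auto.
- apply sumN_nonneg; intros; apply pow2_ge_0.
- apply sumN_nonneg; intros; apply pow2_ge_0.
- apply Rle_trans with (sumN N (fun j => p j * (x t j - e j)^2)).
  { rewrite <- sumN_scal. apply sumN_le. intros j Hj. apply Rmult_le_compat_r. apply pow2_ge_0. auto. }
  apply Rle_trans with (1 := Hdecay). apply Rmult_le_compat_l. left; apply exp_pos.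
  apply Rle_trans with (sumN N (fun j => p j * (x 0 j - c0)^2)).
  { apply (min_identity N p (x 0) m c0 (Hmean 0 (Rle_refl 0)) Hpnn). }
  rewrite <- sumN_scal. apply sumN_le. intros j Hj. apply Rmult_le_compat_r. apply pow2_ge_0. auto.
Qed.


Theorem theorem4 (N : nat) (C : R) (kappa r iota gamma : nat -> R)
  (g : nat -> nat -> R) (th_eq : nat -> R)
  (hC : C > 0)
  (hkappa : forall j, (j < N)%nat -> kappa j > 0)
  (hr : forall j, (j < N)%nat -> r j > 0)
  (hiota : forall j, (j < N)%nat -> iota j >= 0)
  (hg_sym : forall j l, (j < N)%nat -> (l < N)%nat -> g j l = g l j)
  (hg_nonneg : forall j l, (j < N)%nat -> (l < N)%nat -> j <> l -> g j l >= 0)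
  (hconn : connected_graph N g)
  (heq : is_equilibrium N C kappa r iota gamma g th_eq)
  (hclose : forall j l, (j < N)%nat -> (l < N)%nat -> cos (th_eq j - th_eq l) > 0)
  (hload : forall j, (j < N)%nat -> cos (th_eq j - gamma j) < 0) :
  ((exists j, (j < N)%nat /\ iota j > 0) ->
     loc_exp_stable_point N C kappa r iota gamma g th_eq) /\
  ((forall j, (j < N)%nat -> iota j = 0) ->
     loc_exp_stable_sync N C kappa r iota gamma g).
Proof.
split.
- intros [k0 [hk0 hik0]]. eapply part1; eauto.
- intros hz. eapply part2; eauto.
Qed.
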